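(* Let $n \ge 2$ be an integer. For $1 \le i \le n-1$ and $j = n-i$, define the polynomial $$P_i(t) = \left(1 + t\sqrt{\tfrac{j}{i}}\right)^{i}\left(1 - t\sqrt{\tfrac{i}{j}}\right)^{j}.$$ If $1 \le i \le n-2$ (and $j = n-i$), then $P_i(t) > P_{i+1}(t)$ for all $0 < t < \sqrt{\frac{j-1}{i+1}}$. Consequently, $$P_{n-1}(t) < \dots < P_2(t) < P_1(t) \quad \text{for } 0 < t < \frac{1}{\sqrt{n-1}}.$$ *)

(* Defs.v *)
From Stdlib Require Import Reals.
Open Scope R_scope.

Definition P (n i : nat) (t : R) : R :=
  let j := (n - i)%nat in
  (1 + t * sqrt (INR j / INR i)) ^ i * (1 - t * sqrt (INR i / INR j)) ^ j.

(* Main.v *)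
Require Import Defs.
From Coquelicot Require Import Coquelicot.
From Stdlib Require Import Reals Lra Psatz.
Open Scope R_scope.

Lemma dform (k m a b s : R) : 0 < a -> 0 < b -> a * b = 1 -> k * a = m * b ->
  0 < 1 + s*a -> 0 < 1 - s*b ->
  k*a/(1+s*a) - m*b/(1-s*b) = -(k+m)*s/((1+s*a)*(1-s*b)).
Proof.
intros Ha Hb Hab Hk H1 H2.
replace (k+m) with (k*a*(a+b)).
2:{ replace (k*a*(a+b)) with ((k*a)*a + k*(a*b)) by ring. rewrite Hk, Hab. replace (m*b*a) with (m*(a*b)) by ring. rewrite Hab. ring. }
rewrite <- Hk. field. lra.
Qed.

Section Core.
Variables k m a b k' m' a' b' : R.
Hypotheses (Ha : 0 < a) (Hb : 0 < b) (Hab : a*b = 1) (Hk : k*a = m*b)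
  (Ha' : 0 < a') (Hb' : 0 < b') (Hab' : a'*b' = 1) (Hk' : k'*a' = m'*b')
  (HN : k + m = k' + m') (HN0 : 0 < k+m) (Hlt : a' < a).

Let h s := k*ln(1+s*a) + m*ln(1-s*b) - (k'*ln(1+s*a') + m'*ln(1-s*b')).
Let df s := k*a/(1+s*a) - m*b/(1-s*b) - (k'*a'/(1+s*a') - m'*b'/(1-s*b')).

Lemma bb : b < b'.
Proof. nra. Qed.

Lemma pos s : 0 <= s < a' -> 0 < 1 + s*a /\ 0 < 1 - s*b /\ 0 < 1+s*a' /\ 0 < 1 - s*b'.
Proof. intros. pose proof bb. repeat split; nra. Qed.

Lemma hder s : 0 <= s < a' -> is_derive h s (df s).
Proof.
intros Hs. destruct (pos s Hs) as (P1&P2&P3&P4).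
unfold h, df. auto_derive. repeat split; lra. field. repeat split; lra.
Qed.

Lemma dfpos s : 0 <= s < a' -> 0 <= df s /\ (0 < s -> 0 < df s).
Proof.
intros Hs. destruct (pos s Hs) as (P1&P2&P3&P4). pose proof bb.
unfold df. rewrite (dform k m a b s), (dform k' m' a' b' s) by lra.
rewrite <- HN.
set (g := (1 + s * a) * (1 - s * b)). set (g' := (1 + s * a') * (1 - s * b')).
assert (Hg' : 0 < g') by (unfold g'; nra).
assert (Hgg : g' <= g /\ (0 < s -> g' < g)) by (unfold g, g'; split; nra).
replace (- (k + m) * s / g - - (k + m) * s / g') with ((k+m)*s*(g - g')/(g*g'))
  by (field; split; nra).
split.
- apply Rdiv_le_0_compat; [|nra]. apply Rmult_le_pos; nra.
- intros. apply Rdiv_lt_0_compat; [|nra]. apply Rmult_lt_0_compat; nra.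
Qed.

Lemma hcont s : 0 <= s < a' -> continuity_pt h s.
Proof.
intros Hs. apply continuity_pt_filterlim. apply (ex_derive_continuous (K:=R_AbsRing) (V:=R_NormedModule)).
eexists. apply hder. auto.
Qed.

Lemma core t : 0 < t < a' ->
  k'*ln(1+t*a') + m'*ln(1-t*b') < k*ln(1+t*a) + m*ln(1-t*b).
Proof.
intros Ht.
assert (E0 : h 0 = 0).
{ unfold h. rewrite !Rmult_0_l, Rplus_0_r, Rminus_0_r, ln_1. ring. }
destruct (MVT_gen h 0 (t/2) df) as [c [Hc Ec]].
{ intros x Hx. rewrite Rmin_left, Rmax_right in Hx by lra. apply hder; lra. }
{ intros x Hx. rewrite Rmin_left, Rmax_right in Hx by lra. apply hcont; lra. }
rewrite Rmin_left, Rmax_right in Hc by lra.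
destruct (MVT_gen h (t/2) t df) as [d [Hd Ed]].
{ intros x Hx. rewrite Rmin_left, Rmax_right in Hx by lra. apply hder; lra. }
{ intros x Hx. rewrite Rmin_left, Rmax_right in Hx by lra. apply hcont; lra. }
rewrite Rmin_left, Rmax_right in Hd by lra.
destruct (dfpos c) as [C1 _]. lra.
destruct (dfpos d) as [_ D1]. lra.
specialize (D1 ltac:(lra)).
assert (0 < h t) by nra.
unfold h in *. lra.
Qed.
End Core.

Lemma sqpair (k m : R) : 0 < k -> 0 < m ->
  sqrt (m/k) * sqrt (k/m) = 1 /\ k * sqrt (m/k) = m * sqrt (k/m).
Proof.
intros Hk Hm.
assert (E : sqrt (m/k) * sqrt (k/m) = 1).
{ rewrite <- sqrt_mult by (apply Rlt_le, Rdiv_lt_0_compat; lra).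
  replace (m/k*(k/m)) with 1 by (field; lra). apply sqrt_1. }
split; auto.
assert (Pa : 0 < sqrt (m/k)) by (apply sqrt_lt_R0, Rdiv_lt_0_compat; lra).
apply Rmult_eq_reg_r with (sqrt (m/k)); [|lra].
replace (m * sqrt (k/m) * sqrt (m/k)) with (m * (sqrt (m/k) * sqrt (k/m))) by ring.
rewrite E, Rmult_assoc, sqrt_sqrt by (apply Rlt_le, Rdiv_lt_0_compat; lra).
field; lra.
Qed.

Lemma step (i j0 : nat) (t : R) : (1 <= i)%nat -> 0 < t ->
  t < sqrt (INR (j0+1) / INR (i+1)) ->
  (1 + t * sqrt (INR (j0+1) / INR (i+1))) ^ (i+1) * (1 - t * sqrt (INR (i+1) / INR (j0+1))) ^ (j0+1)
  < (1 + t * sqrt (INR (j0+2) / INR i)) ^ i * (1 - t * sqrt (INR i / INR (j0+2))) ^ (j0+2).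
Proof.
intros Hi Ht Hta.
rewrite !plus_INR in *. simpl INR in *.
set (k := INR i) in *. set (m := INR j0) in *.
assert (Hk : 1 <= k) by (unfold k; apply (le_INR 1); lia).
assert (Hm : 0 <= m) by apply pos_INR.
destruct (sqpair k (m+(1+1))) as [E1 E2]; try lra.
destruct (sqpair (k+1) (m+1)) as [E3 E4]; try lra.
set (a := sqrt ((m + (1 + 1)) / k)) in *. set (b := sqrt (k / (m + (1 + 1)))) in *.
set (a' := sqrt ((m + 1) / (k + 1))) in *. set (b' := sqrt ((k + 1) / (m + 1))) in *.
assert (Pa : 0 < a) by (apply sqrt_lt_R0, Rdiv_lt_0_compat; lra).
assert (Pb : 0 < b) by (apply sqrt_lt_R0, Rdiv_lt_0_compat; lra).
assert (Pa' : 0 < a') by (apply sqrt_lt_R0, Rdiv_lt_0_compat; lra).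
assert (Pb' : 0 < b') by (apply sqrt_lt_R0, Rdiv_lt_0_compat; lra).
assert (Hlt : a' < a).
{ apply sqrt_lt_1; try (apply Rlt_le, Rdiv_lt_0_compat; lra).
  apply Rlt_0_minus.
  replace ((m + (1 + 1)) / k - (m + 1) / (k + 1)) with ((m + 1 + k + 1)/(k*(k+1))) by (field; lra).
  apply Rdiv_lt_0_compat; nra. }
assert (Q : 0 <= t < a') by lra. destruct (pos a b a' b' Pb E1 Pa' Pb' E3 Hlt t Q) as (P1&P2&P3&P4).
apply ln_lt_inv; try (apply Rmult_lt_0_compat; apply pow_lt; lra).
rewrite !ln_mult by (apply pow_lt; lra).
rewrite !ln_pow by lra. rewrite !plus_INR. simpl INR. fold k m.
apply (core k (m+(1+1)) a b (k+1) (m+1) a' b'); try lra.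
Qed.

Theorem lemma2 (n : nat) (hn : (2 <= n)%nat) :
  (forall (i : nat) (t : R), (1 <= i)%nat -> (i <= n - 2)%nat ->
     0 < t -> t < sqrt (INR (n - i - 1) / INR (i + 1)) ->
     P n (i + 1) t < P n i t) /\
  (forall t : R, 0 < t -> t < 1 / sqrt (INR (n - 1)) ->
     forall i : nat, (1 <= i)%nat -> (i <= n - 2)%nat ->
     P n (i + 1) t < P n i t).
Proof.
assert (A : forall (i : nat) (t : R), (1 <= i)%nat -> (i <= n - 2)%nat ->
     0 < t -> t < sqrt (INR (n - i - 1) / INR (i + 1)) ->
     P n (i + 1) t < P n i t).
{ intros i t Hi Hin Ht Hta.
  destruct (Nat.le_exists_sub (i+2) n ltac:(lia)) as [j0 [Hj0 _]].
  unfold P. cbv zeta.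
  replace (n - (i+1))%nat with (j0+1)%nat by lia.
  replace (n - i)%nat with (j0+2)%nat by lia.
  replace (n - i - 1)%nat with (j0+1)%nat in Hta by lia.
  apply step; auto. }
split; auto.
intros t Ht Ht1 i Hi Hin. apply A; auto.
destruct (Nat.le_exists_sub (i+2) n ltac:(lia)) as [j0 [Hj0 _]].
replace (n - i - 1)%nat with (j0+1)%nat by lia.
replace (n - 1)%nat with (i + j0 + 1)%nat in Ht1 by lia.
eapply Rlt_le_trans; [exact Ht1|].
rewrite !plus_INR in *. simpl INR in *.
assert (Hk : 1 <= INR i) by (apply (le_INR 1); lia).
assert (Hm : 0 <= INR j0) by apply pos_INR.
replace (1 / sqrt (INR i + INR j0 + 1)) with (sqrt (1 / (INR i + INR j0 + 1))) by (rewrite sqrt_div_alt, sqrt_1 by lra; reflexivity).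
apply sqrt_le_1; try (apply Rlt_le, Rdiv_lt_0_compat; lra).
apply Rge_le, Rminus_ge. apply Rle_ge.
replace ((INR j0 + 1) / (INR i + 1) - 1 / (INR i + INR j0 + 1)) with
  (((INR j0 + 1)*(INR i + INR j0 + 1) - (INR i + 1))/((INR i + 1)*(INR i + INR j0 + 1))) by (field; lra).
apply Rdiv_le_0_compat; nra.
Qed.
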